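(* Let $Q$ be an absolutely continuous stochastic algorithm with canonical Hamiltonian $H_Q$, let $F:\mathcal{H}\times\mathcal{X}^n\to\mathbb{R}$ be measurable, and define for $h\in\mathcal{H}$ $$\psi_F(h):=\ln \mathbb{E}_{\mathbf{X}\sim\mu^n}\left[\exp\left(F(h,\mathbf{X})+H_Q(h,\mathbf{X})-\mathbb{E}_{\mathbf{X}'\sim\mu^n}[H_Q(h,\mathbf{X}')]\right)\right].$$ Then: (i) $\ln \mathbb{E}_{\mathbf{X}\sim\mu^n}\mathbb{E}_{h\sim Q_{\mathbf{X}}}\left[e^{F(h,\mathbf{X})}\right]\le \sup_{h\in\mathcal{H}}\psi_F(h)$. (ii) For every $\delta>0$, with probability at least $1-\delta$ in $\mathbf{X}\sim\mu^n$ and $h\sim Q_{\mathbf{X}}$, $F(h,\mathbf{X})\le \sup_{h\in\mathcal{H}}\psi_F(h)+\ln(1/\delta)$. (iii) For every $\delta>0$, with probability at least $1-\delta$ in $\mathbf{X}\sim\mu^n$, $\mathbb{E}_{h\sim Q_{\mathbf{X}}}[F(h,\mathbf{X})]\le \sup_{h\in\mathcal{H}}\psi_F(h)+\ln(1/\delta)$.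
   Context: $\mathcal{X}$ is a measurable space with probability measure $\mu$; $\mathbf{X}=(X_1,\dots,X_n)\sim\mu^n$ and $\mathbf{X}'$ is an independent copy. $\mathcal{H}$ is a measurable space of measurable functions $h:\mathcal{X}\to[0,\infty)$, equipped with a nonnegative (not necessarily finite) a-priori measure $\pi$. A stochastic algorithm $Q$ maps each $\mathbf{x}\in\mathcal{X}^n$ to a probability measure $Q_{\mathbf{x}}$ on $\mathcal{H}$; it is absolutely continuous if $Q_{\mathbf{x}}$ and $\pi$ are mutually absolutely continuous for every $\mathbf{x}$. Its canonical Hamiltonian is $H_Q(h,\mathbf{x})=\ln\big((dQ_{\mathbf{x}}/d\pi)(h)\big)$, assumed jointly measurable. ''With probability in $\mathbf{X}\sim\mu^n$ and $h\sim Q_{\mathbf{X}}$'' refers to the joint law where first $\mathbf{X}\sim\mu^n$ and then $h\sim Q_{\mathbf{X}}$. Standing assumption: all functions on $\mathcal{H}\times\mathcal{X}^n$ considered have finite exponential moments of all orders with respect to both arguments. *)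

(* Defs.v *)
From HB Require Import structures.
From mathcomp Require Import all_boot all_order all_algebra.
From mathcomp Require Import all_classical all_reals all_analysis.
Set Implicit Arguments. Unset Strict Implicit. Unset Printing Implicit Defensive.
Import Order.TTheory GRing.Theory Num.Theory.
Local Open Scope classical_set_scope.
Local Open Scope ring_scope.
Local Open Scope ereal_scope.

(* Pn is the n-fold product probability mu^n on n.-tuple X: the (unique)
   probability measure on the product sigma-algebra agreeing with the product
   of the marginals on measurable rectangles. *)
Definition is_product_prob (R : realType) (d : measure_display)
  (X : measurableType d) (mu : probability X R) (n : nat)
  (Pn : probability (n.-tuple X) R) : Prop :=
  forall A : 'I_n -> set X, (forall i, measurable (A i)) ->
    Pn [set t | forall i, A i (tnth t i)] = \prod_(i < n) mu (A i).

Definition abs_cont_algo (R : realType) (dZ dH : measure_display)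
  (Z : measurableType dZ) (Hs : measurableType dH)
  (pi : {measure set Hs -> \bar R}) (Q : R.-pker Z ~> Hs) : Prop :=
  forall x : Z, (Q x `<< pi) /\ (pi `<< Q x).

(* HQ is the canonical Hamiltonian of Q: it is jointly measurable and
   exp (HQ (.,x)) is (a version of) the Radon-Nikodym derivative dQ_x/dpi,
   i.e. HQ(h,x) = ln ((dQ_x/dpi)(h)). *)
Definition canonical_hamiltonian (R : realType) (dZ dH : measure_display)
  (Z : measurableType dZ) (Hs : measurableType dH)
  (pi : {measure set Hs -> \bar R}) (Q : R.-pker Z ~> Hs)
  (HQ : Hs -> Z -> R) : Prop :=
  measurable_fun [set: Hs * Z] (fun p => HQ p.1 p.2) /\
  forall (x : Z) (A : set Hs), measurable A ->
    Q x A = \int[pi]_(h in A) (expR (HQ h x))%:E.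

Definition finite_exp_moments (R : realType) (dZ dH : measure_display)
  (Z : measurableType dZ) (Hs : measurableType dH)
  (P : probability Z R) (Q : R.-pker Z ~> Hs) (f : Hs -> Z -> R) : Prop :=
  (forall (h : Hs) (l : R),
     P.-integrable [set: Z] (fun x => (expR (l * f h x))%:E)) /\
  (forall (x : Z) (l : R),
     (Q x).-integrable [set: Hs] (fun h => (expR (l * f h x))%:E)).

Definition psiF (R : realType) (dZ dH : measure_display)
  (Z : measurableType dZ) (Hs : measurableType dH)
  (P : probability Z R) (HQ F : Hs -> Z -> R) (h : Hs) : \bar R :=
  lne (\int[P]_x (expR (F h x + HQ h x - Rintegral P [set: Z] (HQ h)))%:E).

(* Main.v *)
Require Import Defs.
From HB Require Import structures.
From mathcomp Require Import all_boot all_order all_algebra.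
From mathcomp Require Import all_classical all_reals all_analysis.
From mathcomp Require Import measurable_realfun.
From mathcomp Require Import lra ring.
Import Order.TTheory GRing.Theory Num.Theory.
Local Open Scope classical_set_scope.
Local Open Scope ring_scope.
Local Open Scope ereal_scope.
Section density.
Import HBNNSimple.
Context d (T : measurableType d) (R : realType).
Variables (mu nu : {measure set T -> \bar R}) (gr : T -> R).
Hypothesis mgr : measurable_fun setT gr.
Hypothesis gr0 : forall x, (0 <= gr x)%R.
Hypothesis nuE : forall A, measurable A -> nu A = \int[mu]_(x in A) (gr x)%:E.
Let g := fun x => (gr x)%:E.

Lemma density_change f E : (forall x, 0 <= f x) ->
    measurable E -> measurable_fun E f ->
  \int[mu]_(x in E) (f x * g x) = \int[nu]_(x in E) f x.
Proof.
move=> f0 mE mf.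
have mg : measurable_fun setT g by exact/measurable_EFinP.
pose h := nnsfun_approx mE mf.
have -> : \int[nu]_(x in E) f x =
    lim (\int[nu]_(x in E) (EFin \o h n) x @[n --> \oo]).
  have fE x : E x -> f x = lim ((EFin \o h n) x @[n --> \oo]).
    by move=> Ex; apply/esym/cvg_lim => //; exact: cvg_nnsfun_approx.
  under eq_integral => x /[!inE] /fE -> //.
  apply: monotone_convergence => //.
  - move=> n; apply/measurable_EFinP.
    by apply: (measurable_funS measurableT) => //; exact/measurable_funP.
  - by move=> n x Ex //=; rewrite lee_fin.
  - by move=> x Ex a b ab; rewrite lee_fin; exact/lefP/nd_nnsfun_approx.
have -> : \int[mu]_(x in E) (f \* g) x =
    lim (\int[mu]_(x in E) ((EFin \o h n) \* g) x @[n --> \oo]).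
  have fg x : E x -> f x * g x = lim (((EFin \o h n) \* g) x @[n --> \oo]).
    by move=> Ex; apply/esym/cvg_lim => //; apply: cvgeZr;
      [by []|exact: cvg_nnsfun_approx].
  under eq_integral => x /[!inE] /fg -> //.
  apply: monotone_convergence => [//| | |].
  - move=> n; apply/emeasurable_funM; apply/measurable_funTS => //.
      exact/measurable_EFinP.
  - by move=> n x Ex /=; rewrite mule_ge0 ?lee_fin.
  - by move=> x Ex a b ab/=; rewrite lee_wpmul2r ?lee_fin//; exact/lefP/nd_nnsfun_approx.
suff suf n : \int[mu]_(x in E) ((EFin \o h n) x * g x) =
    \int[nu]_(x in E) (EFin \o h n) x.
  by under eq_fun do rewrite suf.
transitivity (\int[nu]_(x in E)
   (\sum_(y \in range (h n)) (y * \1_(h n @^-1` [set y]) x)%:E)); last first.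
  by apply: eq_integral => t tE; rewrite /= fimfunE -fsumEFin.
have indich m r : measurable_fun E (fun x => (r * \1_(h m @^-1` [set r]) x)%:E).
  by apply: (measurable_comp measurableT) => //; exact: measurable_funM.
rewrite ge0_integral_fsum//; last by move=> m y Ey; exact: nnfun_muleindic_ge0.
transitivity (\int[mu]_(x in E) (\sum_(y \in range (h n))
    (y * \1_(h n @^-1` [set y]) x)%:E * g x)).
  under [RHS]eq_integral => x xE.
    rewrite -ge0_mule_fsuml => [|y]; last exact: nnfun_muleindic_ge0.
    rewrite fsumEFin // -(fimfunE _ x); over.
  by [].
rewrite ge0_integral_fsum//; last 2 first.
  - move=> y; apply: emeasurable_funM => //; apply: measurable_funTS => //.
  - by move=> m y Ey; rewrite mule_ge0 ?lee_fin//; exact: nnfun_muleindic_ge0.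
apply: eq_fsbigr => r rhn.
under [RHS]eq_integral do rewrite EFinM.
rewrite integralZl_indic_nnsfun => //.
under eq_integral do rewrite EFinM -muleA.
rewrite ge0_integralZl//.
- under eq_integral do rewrite muleC.
  rewrite (eq_integral (g \_ (h n @^-1` [set r]))); last first.
    by move=> x xE; rewrite epatch_indic.
  by rewrite -integral_mkcondr -nuE// integral_indic// setIC.
- apply: emeasurable_funM; first exact/measurable_EFinP.
  exact/measurable_funTS.
- by move=> t Et; rewrite mule_ge0 ?lee_fin.
- by move: rhn; rewrite inE => -[t _ <-]; rewrite lee_fin.
Qed.
End density.
Section jensen.
Context d (T : measurableType d) (R : realType).
Variable mu : {measure set T -> \bar R}.
Hypothesis mu1 : mu setT = 1.

Lemma jensen_exp (f : T -> R) : mu.-integrable setT (EFin \o f) ->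
  (expR (Rintegral mu setT f))%:E <= \int[mu]_x (expR (f x))%:E.
Proof.
move=> intf; set a := Rintegral mu setT f.
have mf : measurable_fun setT f by exact/measurable_EFinP/(measurable_int mu intf).
have mef : measurable_fun setT (fun x => (expR (f x))%:E).
  by apply/measurable_EFinP; exact: measurableT_comp.
have fa : \int[mu]_x (f x)%:E = a%:E.
  by rewrite /a /Rintegral fineK// (integrable_fin_num _ intf).
have [ie|nie] := pselect (mu.-integrable setT (fun x => (expR (f x))%:E)); last first.
  have : ~ (\int[mu]_x `|(expR (f x))%:E| < +oo).
    by move=> h; apply: nie; apply/integrableP; split.
  under eq_integral do rewrite gee0_abs ?lee_fin ?expR_ge0//.
  by move/negP; rewrite -leNgt leye_eq => /eqP ->; rewrite leey.
have ic : mu.-integrable setT (fun _ => (expR a * (1 - a))%:E).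
  apply/integrableP; split; first exact: measurable_cst.
  by rewrite integral_cst// mu1 mule1 ltry.
have iZ : mu.-integrable setT (fun x => (expR a)%:E * (f x)%:E).
  exact: integrableZl.
have -> : (expR a)%:E = \int[mu]_x ((expR a * (1 - a))%:E + (expR a)%:E * (f x)%:E).
  rewrite integralD// integral_cst//.
  rewrite mu1.
  rewrite mule1 integralZl// fa.
  by rewrite -EFinM -EFinD; congr EFin; ring.
apply: le_integral => //; first exact: integrableD.
move=> x _; rewrite -EFinM -EFinD lee_fin.
have -> : (expR (f x) = expR a * expR (f x - a))%R by rewrite -expRD addrC subrK.
have h := expR_ge1Dx (f x - a); have e := expR_ge0 a; nra.
Qed.

Lemma integrable_from_exp (f : T -> R) : measurable_fun setT f ->
  mu.-integrable setT (fun x => (expR (f x))%:E) ->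
  mu.-integrable setT (fun x => (expR (- f x))%:E) ->
  mu.-integrable setT (EFin \o f).
Proof.
move=> mf i1 i2.
apply: (le_integrable _ _ _ (integrableD _ i1 i2)) => //.
  exact/measurable_EFinP.
move=> x _ /=; rewrite lee_fin [X in (_ <= X)%R]ger0_norm; last first.
  by apply: addr_ge0; exact: expR_ge0.
have h1 := expR_ge1Dx (f x); have h2 := expR_ge1Dx (- f x).
have h3 := expR_ge0 (f x); have h4 := expR_ge0 (- f x).
case: (lerP 0 (f x)) => h; [rewrite ger0_norm// | rewrite ltr0_norm//]; lra.
Qed.
End jensen.
Section sfin.
Context d (T : measurableType d) (R : realType).
Variables (pi q : {measure set T -> \bar R}) (gr : T -> R).
Hypothesis mgr : measurable_fun setT gr.
Hypothesis gr0 : forall x, (0 < gr x)%R.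
Hypothesis qE : forall A, measurable A -> q A = \int[pi]_(x in A) (gr x)%:E.
Hypothesis qT : q setT = 1.

Lemma density_sigma_finite : sigma_finite setT pi.
Proof.
pose F (k : nat) := gr @^-1` `[((k.+1%:R)^-1 : R)%R, +oo[%classic.
have mF k : measurable (F k).
  by rewrite /F -[X in measurable X]setTI; apply: mgr => //; exact: measurable_itv.
exists F.
  apply/seteqP; split => // h _.
  exists (Num.truncn (gr h)^-1) => //.
  rewrite /F /= in_itv /= andbT.
  rewrite -[X in (_ <= X)%R]invrK lef_pV2 ?posrE ?invr_gt0 ?ltr0n//.
  exact/ltW/truncnS_gt.
move=> k; split => //.
have kpos : (0 < k.+1%:R :> R)%R by rewrite ltr0n.
have h1 : ((k.+1%:R)^-1)%:E * pi (F k) <= q (F k).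
  have qF := qE _ (mF k). rewrite qF. rewrite -(integral_cst pi (mF k)). apply: ge0_le_integral => //.
  - by move=> x _; rewrite lee_fin invr_ge0 ler0n.
  - exact/measurable_funTS/measurable_EFinP.
  - by move=> x; rewrite /F /= in_itv /= andbT => hx; rewrite lee_fin.
have h2 : q (F k) <= 1 by rewrite -qT; apply: le_measure; rewrite ?inE.
have h3 : pi (F k) = (k.+1%:R)%:E * (((k.+1%:R)^-1)%:E * pi (F k)).
  by rewrite muleA -EFinM divff ?gt_eqF // mul1e.
rewrite h3; apply: (@le_lt_trans _ _ ((k.+1%:R)%:E * 1)).
  apply: lee_pmul.
  - by rewrite lee_fin ltW.
  - by apply: mule_ge0; [rewrite lee_fin invr_ge0 ler0n | exact: measure_ge0].
  - by [].
  - exact: le_trans h1 h2.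
by rewrite mule1 ltry.
Qed.
End sfin.

Section tonelli.
Context (R : realType) d1 d2 (T1 : measurableType d1) (T2 : measurableType d2).
Variable (P : probability T1 R) (pi : {measure set T2 -> \bar R}).
Hypothesis spi : sigma_finite setT pi.
Definition pif : set T2 -> \bar R := fun A => pi A.
HB.instance Definition _ := Measure.copy pif pi.
HB.instance Definition _ := Measure_isSigmaFinite.Build _ _ _ pif spi.
Lemma tonelli_pi (f : T1 * T2 -> \bar R) : measurable_fun [set: T1 * T2] f -> (forall x, 0 <= f x) ->
  \int[P]_x \int[pi]_y f (x, y) = \int[pi]_y \int[P]_x f (x, y).
Proof. move=> mf f0; exact: (@fubini_tonelli _ _ _ _ _ P pif). Qed.
Lemma measurable_inner_pi (f : T1 * T2 -> \bar R) : measurable_fun [set: T1 * T2] f -> (forall x, 0 <= f x) ->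
  measurable_fun [set: T2] (fun y => \int[P]_x f (x, y)).
Proof. move=> mf f0; exact: (@measurable_fun_fubini_tonelli_G _ _ _ _ _ P f). Qed.
End tonelli.

Section moments.
Context {d} {T : measurableType d} {R : realType}.
Lemma mom1 {mu : {measure set T -> \bar R}} {f : T -> R} :
  (forall l, mu.-integrable setT (fun x => (expR (l * f x))%:E)) ->
  mu.-integrable setT (fun x => (expR (f x))%:E).
Proof. by move=> h; have := h 1%R; under eq_fun do rewrite mul1r. Qed.
Lemma momN {mu : {measure set T -> \bar R}} {f : T -> R} :
  (forall l, mu.-integrable setT (fun x => (expR (l * f x))%:E)) ->
  mu.-integrable setT (fun x => (expR (- f x))%:E).
Proof. by move=> h; have := h (-1)%R; under eq_fun do rewrite mulN1r. Qed.
End moments.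

Theorem proposition1 (R : realType) (dX dH : measure_display)
  (X : measurableType dX) (Hs : measurableType dH)
  (mu : probability X R) (n : nat) (Pn : probability (n.-tuple X) R)
  (pi : {measure set Hs -> \bar R}) (Q : R.-pker (n.-tuple X) ~> Hs)
  (HQ F : Hs -> n.-tuple X -> R) :
  is_product_prob mu Pn ->
  abs_cont_algo pi Q ->
  canonical_hamiltonian pi Q HQ ->
  measurable_fun [set: Hs * n.-tuple X] (fun p => F p.1 p.2) ->
  finite_exp_moments Pn Q F ->
  finite_exp_moments Pn Q HQ ->
  let S := ereal_sup (range (psiF Pn HQ F)) in
  [/\ lne (\int[Pn]_x \int[Q x]_h (expR (F h x))%:E) <= S,
      (forall delta : R, (0 < delta)%R ->
        (1 - delta)%:E <=
        \int[Pn]_x Q x [set h | (F h x)%:E <= S + (ln delta^-1)%:E])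
    & (forall delta : R, (0 < delta)%R ->
        (1 - delta)%:E <=
        Pn [set x | \int[Q x]_h (F h x)%:E <= S + (ln delta^-1)%:E])].
Proof.
move=> _ _ [mH QE] mF [Fm1 Fm2] [Hm1 Hm2] S.
set T := n.-tuple X.
have Pn1 : (Pn : {measure set T -> \bar R}) setT = 1 by exact: probability_setT.
have Q1 x : Q x setT = 1 by exact: prob_kernel.
have mFx x : measurable_fun setT (fun h => F h x).
  exact: (measurableT_comp mF (pair2_measurable x)).
have mFh h : measurable_fun setT (fun x => F h x).
  exact: (measurableT_comp mF (pair1_measurable h)).
have mHx x : measurable_fun setT (fun h => HQ h x).
  exact: (measurableT_comp mH (pair2_measurable x)).
have mHh h : measurable_fun setT (fun x => HQ h x).
  exact: (measurableT_comp mH (pair1_measurable h)).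
have mswF : measurable_fun [set: T * Hs] (fun p => F p.2 p.1).
  exact: (measurableT_comp mF (@measurable_swap _ _ T Hs)).
have mswH : measurable_fun [set: T * Hs] (fun p => HQ p.2 p.1).
  exact: (measurableT_comp mH (@measurable_swap _ _ T Hs)).
have [x0 _] : exists x0 : T, True.
  apply: contrapT => nx.
  have T0 : [set: T] = set0 by apply/seteqP; split => // x _; apply: nx; exists x.
  by move: Pn1; rewrite T0 measure0 => /eqP; rewrite eq_sym onee_eq0.
have [h0 _] : exists h0 : Hs, True.
  apply: contrapT => nh.
  have H0 : [set: Hs] = set0 by apply/seteqP; split => // h _; apply: nh; exists h.
  by move: (Q1 x0); rewrite H0 measure0 => /eqP; rewrite eq_sym onee_eq0.
have spi : sigma_finite setT pi.
  apply: (@density_sigma_finite _ _ _ pi (Q x0) (fun h => expR (HQ h x0))).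
  - exact: measurableT_comp.
  - by move=> h; exact: expR_gt0.
  - by move=> A mA; exact: QE.
  - exact: Q1.
have phiE x : \int[Q x]_h (expR (F h x))%:E = \int[pi]_h (expR (F h x + HQ h x))%:E.
  rewrite -(@density_change _ _ _ pi (Q x) (fun h => expR (HQ h x))) //.
  - by apply: eq_integral => h _; rewrite -EFinM expRD.
  - exact: measurableT_comp.
  - by move=> A mA; exact: QE.
  - by apply/measurable_EFinP; exact: measurableT_comp.
have psi_le h : psiF Pn HQ F h <= S by apply: ereal_sup_ubound; exists h.
have iHP h : Pn.-integrable setT (EFin \o HQ h).
  apply: (@integrable_from_exp _ _ _ Pn) => //.
  - exact: (mom1 (Hm1 h)).
  - exact: (momN (Hm1 h)).
have mG : measurable_fun [set: T * Hs] (fun p => (expR (F p.2 p.1 + HQ p.2 p.1))%:E).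
  apply/measurable_EFinP; apply: measurableT_comp => //; exact: measurable_funD.
have mEH : measurable_fun [set: T * Hs] (fun p => (expR (HQ p.2 p.1))%:E).
  by apply/measurable_EFinP; apply: measurableT_comp.
have stepC h : \int[Pn]_x (expR (F h x + HQ h x))%:E <=
    expeR S * \int[Pn]_x (expR (HQ h x))%:E.
  set c := Rintegral Pn setT (HQ h).
  have -> : \int[Pn]_x (expR (F h x + HQ h x))%:E =
      (expR c)%:E * \int[Pn]_x (expR (F h x + HQ h x - c))%:E.
    rewrite -ge0_integralZl //.
    - by apply: eq_integral => x _; rewrite -EFinM -expRD; congr (EFin (expR _)); ring.
    - apply/measurable_EFinP; apply: measurableT_comp => //.
      by apply: measurable_funB => //; exact: measurable_funD.
  have hI : lne (\int[Pn]_x (expR (F h x + HQ h x - c))%:E) <= S := psi_le h.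
  move: hI; rewrite -lee_expeR lneK; last first.
    by rewrite in_itv /= leey andbT; apply: integral_ge0 => x _; rewrite lee_fin expR_ge0.
  move=> hI; rewrite muleC; apply: lee_pmul => //.
  - by apply: integral_ge0 => x _; rewrite lee_fin expR_ge0.
  - exact: (@jensen_exp _ _ _ Pn Pn1).
have QT x : \int[pi]_h (expR (HQ h x))%:E = 1 by rewrite -QE // Q1.
have mainb : \int[Pn]_x \int[Q x]_h (expR (F h x))%:E <= expeR S.
  under eq_integral do rewrite phiE.
  rewrite (@tonelli_pi _ _ _ _ _ Pn pi spi _ mG); last by move=> p; rewrite lee_fin expR_ge0.
  apply: (@le_trans _ _ (\int[pi]_h (expeR S * \int[Pn]_x (expR (HQ h x))%:E))).
    apply: ge0_le_integral => //.
    - by move=> h _; apply: integral_ge0 => x _; rewrite lee_fin expR_ge0.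
    - apply: (@measurable_inner_pi _ _ _ _ _ Pn _ mG).
      by move=> p; rewrite lee_fin expR_ge0.
    - apply: measurable_funeM; apply: (@measurable_inner_pi _ _ _ _ _ Pn _ mEH).
      by move=> p; rewrite lee_fin expR_ge0.
    - by move=> h _; exact: stepC.
  rewrite ge0_integralZl //; last 3 first.
    - apply: (@measurable_inner_pi _ _ _ _ _ Pn _ mEH).
      by move=> p; rewrite lee_fin expR_ge0.
    - by move=> h _; apply: integral_ge0 => x _; rewrite lee_fin expR_ge0.
    - exact: expeR_ge0.
  rewrite -(@tonelli_pi _ _ _ _ _ Pn pi spi _ mEH); last by move=> p; rewrite lee_fin expR_ge0.
  under eq_integral do rewrite QT.
  rewrite integral_cst // Pn1 mule1 mule1 //.
have iFP h : Pn.-integrable setT (EFin \o F h).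
  apply: (@integrable_from_exp _ _ _ Pn) => //.
  - exact: (mom1 (Fm1 h)).
  - exact: (momN (Fm1 h)).
have S_gt : -oo < S.
  apply: (lt_le_trans _ (psi_le h0)); rewrite /psiF.
  set c := Rintegral Pn setT (HQ h0).
  have ig : Pn.-integrable setT (EFin \o (fun x => F h0 x + HQ h0 x - c)%R).
    have -> : (EFin \o (fun x => F h0 x + HQ h0 x - c)%R) =
        ((EFin \o F h0) \+ (EFin \o HQ h0)) \- (cst c%:E).
      by apply/funext => x /=; rewrite EFinB EFinD.
    apply: integrableB => //; first exact: integrableD.
    apply/integrableP; split; first exact: measurable_cst.
    by rewrite integral_cst// Pn1 mule1 ltry.
  have J := @jensen_exp _ _ _ Pn Pn1 _ ig.
  apply: (@lt_le_trans _ _ (lne (expR (Rintegral Pn setT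
      (fun x => F h0 x + HQ h0 x - c)%R))%:E)).
    by rewrite lne_EFin ?expR_gt0// expRK ltNye.
  rewrite lee_lne //; rewrite in_itv /= leey andbT ?lee_fin ?expR_ge0//.
  by apply: integral_ge0 => x _; rewrite lee_fin expR_ge0.
have part1 : lne (\int[Pn]_x \int[Q x]_h (expR (F h x))%:E) <= S.
  rewrite -(expeRK S) lee_lne //; rewrite in_itv /= leey andbT ?expeR_ge0//.
  by apply: integral_ge0 => x _; apply: integral_ge0 => h _; rewrite lee_fin expR_ge0.
have le1 (delta : R) : (0 < delta)%R -> (1 - delta)%:E <= 1.
  by move=> d0; apply: (@le_trans _ _ 1%:E) => //; rewrite lee_fin lerBlDr lerDl ltW.
have [[s Ss]|Sy] : (exists s : R, S = s%:E) \/ S = +oo.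
  have [Sfin|Sy] := boolP (S \is a fin_num).
    by left; exists (fine S); rewrite fineK.
  right; move: Sy; rewrite fin_numE negb_and !negbK => /orP[/eqP Sn|/eqP //].
  by move: S_gt; rewrite Sn ltxx.
2: { split => // delta d0; rewrite Sy addye //.
  - rewrite (_ : \int[Pn]_x _ = \int[Pn]_x (cst 1 x)); last first.
      apply: eq_integral => x _.
      rewrite (_ : [set h | _ <= +oo] = setT) ?Q1 //.
      by apply/seteqP; split => // h _; rewrite /= leey.
    by rewrite integral_cst // Pn1 mule1; exact: le1.
  - rewrite (_ : [set x | _ <= +oo] = setT) ?Pn1; first exact: le1.
    by apply/seteqP; split => // h _; rewrite /= leey. }
have mainb' : \int[Pn]_x \int[Q x]_h (expR (F h x))%:E <= (expR s)%:E.
  by move: mainb; rewrite Ss.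
have mphi : measurable_fun setT (fun x => \int[Q x]_h (expR (F h x))%:E).
  apply: (measurable_fun_integral_finite_kernel
    (fun p : T * Hs => (expR (F p.2 p.1))%:E) Q).
  - by move=> p; rewrite lee_fin expR_ge0.
  - by apply/measurable_EFinP; exact: measurableT_comp.
have phi0 x : 0 <= \int[Q x]_h (expR (F h x))%:E.
  by apply: integral_ge0 => h _; rewrite lee_fin expR_ge0.
have edelta (delta : R) : (0 < delta)%R ->
    (expR (- (s + ln delta^-1)) * expR s = delta)%R.
  move=> d0; rewrite -expRD opprD addrAC addNr add0r lnV ?posrE //.
  by rewrite opprK lnK ?posrE.
have fin1 (delta : R) (a : \bar R) : (0 < delta)%R -> 1 <= a + delta%:E ->
    (1 - delta)%:E <= a.
  by move=> d0 h; rewrite EFinB leeBlDr.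
split => //.
- move=> delta d0; rewrite Ss.
  set c := s%:E + (ln delta^-1)%:E.
  set r := (s + ln delta^-1)%R.
  have cr : c = r%:E by rewrite /c /r EFinD.
  pose D := [set p : T * Hs | (F p.2 p.1)%:E <= c].
  have mD : measurable D.
    rewrite -[D]setTI; apply: emeasurable_fun_infty_c => //.
    exact/measurable_EFinP.
  have mB x : measurable [set h | (F h x)%:E <= c].
    rewrite -[X in measurable X]setTI; apply: emeasurable_fun_infty_c => //.
    exact/measurable_EFinP.
  have QB x : Q x [set h | (F h x)%:E <= c] = \int[Q x]_h (\1_D (x, h))%:E.
    rewrite integral_indic //; last exact: mB.
    by congr (Q x _); apply/seteqP; split => h /=; [move=> ?; split | case].
  have mQB : measurable_fun setT (fun x => Q x [set h | (F h x)%:E <= c]).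
    rewrite (_ : (fun x => _) = (fun x => \int[Q x]_h (\1_D (x, h))%:E)); last first.
      by apply/funext => x; exact: QB.
    apply: (measurable_fun_integral_finite_kernel (fun p => (\1_D p)%:E) Q) => //.
    - exact/measurable_EFinP/measurable_indic.
  have pt x : 1 <= Q x [set h | (F h x)%:E <= c] +
      (expR (- r))%:E * \int[Q x]_h (expR (F h x))%:E.
    set B := [set h | (F h x)%:E <= c].
    rewrite -[X in X <= _](Q1 x) -[X in Q x X <= _](setUv B).
    rewrite measureU //; [|exact: mB|exact/measurableC/mB|by rewrite setICr].
    apply: leeD2l.
    rewrite -[X in Q x X <= _]setIT -integral_indic //; last exact/measurableC/mB.
    rewrite -ge0_integralZl //; last first.
      by apply/measurable_EFinP; exact: measurableT_comp.
    apply: ge0_le_integral => //.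
    - apply/measurable_EFinP; apply: measurable_indic; exact/measurableC/mB.
    - apply: measurable_funeM; apply/measurable_EFinP; exact: measurableT_comp.
    move=> h _; rewrite indicE; case: (boolP (h \in ~` B)) => hB.
      move: hB; rewrite inE /B /= cr lee_fin => /negP; rewrite -ltNge => hlt.
      rewrite -EFinM lee_fin -expRD -expR0 ler_expR addrC subr_ge0.
      exact: ltW.
    by apply: mule_ge0; rewrite lee_fin ?expR_ge0.
  apply: fin1 => //.
  have : \int[Pn]_x (cst 1 x) <= \int[Pn]_x (Q x [set h | (F h x)%:E <= c] +
      (expR (- r))%:E * \int[Q x]_h (expR (F h x))%:E).
    apply: ge0_le_integral => //.
    by apply: emeasurable_funD => //; exact: measurable_funeM.
  rewrite integral_cst // Pn1 mule1 ge0_integralD //; last 2 first.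
    - by move=> x _; apply: mule_ge0; [rewrite lee_fin expR_ge0 | exact: phi0].
    - exact: measurable_funeM.
  rewrite ge0_integralZl //.
  move=> h1; apply: (le_trans h1); apply: leeD2l.
  rewrite -(edelta delta d0) EFinM; apply: lee_wpmul2l => //.
move=> delta d0; rewrite Ss.
set c := s%:E + (ln delta^-1)%:E.
set r := (s + ln delta^-1)%R.
have cr : c = r%:E by rewrite /c /r EFinD.
have mpsi : measurable_fun setT (fun x => \int[Q x]_h (F h x)%:E).
  rewrite (_ : (fun x => _) = (fun x =>
      \int[Q x]_h ((fun p : T * Hs => (F p.2 p.1)%:E)^\+ (x, h)) -
      \int[Q x]_h ((fun p : T * Hs => (F p.2 p.1)%:E)^\- (x, h)))); last first.
    by apply/funext => x; rewrite integralE; congr (_ - _); apply: eq_integral => h _; rewrite ?funeposE ?funenegE.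
  apply: emeasurable_funB.
  - apply: (measurable_fun_integral_finite_kernel
      ((fun p : T * Hs => (F p.2 p.1)%:E)^\+) Q).
      by move=> p; exact: funepos_ge0.
    by apply: measurable_funepos; exact/measurable_EFinP.
  - apply: (measurable_fun_integral_finite_kernel
      ((fun p : T * Hs => (F p.2 p.1)%:E)^\-) Q).
      by move=> p; exact: funeneg_ge0.
    by apply: measurable_funeneg; exact/measurable_EFinP.
set A := [set x | \int[Q x]_h (F h x)%:E <= c].
have mA : measurable A.
  by rewrite -[X in measurable X]setTI; exact: emeasurable_fun_infty_c.
have pt x : 1 <= (\1_A x)%:E + (expR (- r))%:E * \int[Q x]_h (expR (F h x))%:E.
  rewrite indicE; case: (boolP (x \in A)) => xA.
    by apply: leeDl; apply: mule_ge0; [rewrite lee_fin expR_ge0 | exact: phi0].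
  rewrite (_ : (false%:R)%:E = 0) // add0e.
  have iF : (Q x).-integrable setT (EFin \o (fun h => F h x)).
    apply: (@integrable_from_exp _ _ _ (Q x)) => //.
    - exact: (mom1 (Fm2 x)).
    - exact: (momN (Fm2 x)).
  have J := @jensen_exp _ _ _ (Q x) (Q1 x) _ iF.
  have psiE : \int[Q x]_h (F h x)%:E = (Rintegral (Q x) setT (fun h => F h x))%:E.
    by rewrite /Rintegral fineK // (integrable_fin_num _ iF).
  move: xA => /negP; rewrite in_setE /A /= psiE cr lee_fin => /negP; rewrite -ltNge => hlt.
  apply: (le_trans _ (lee_wpmul2l _ J)); last by rewrite lee_fin expR_ge0.
  rewrite -EFinM lee_fin -expRD -expR0 ler_expR addrC subr_ge0.
  exact: ltW.
apply: fin1 => //.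
have : \int[Pn]_x (cst 1 x) <= \int[Pn]_x ((\1_A x)%:E +
    (expR (- r))%:E * \int[Q x]_h (expR (F h x))%:E).
  apply: ge0_le_integral => //.
  apply: emeasurable_funD => //; last exact: measurable_funeM.
  exact/measurable_EFinP/measurable_indic.
have PA : \int[Pn]_x (\1_A x)%:E = Pn A.
  rewrite integral_indic //; congr (Pn _).
  by apply/seteqP; split => x /=; [case|move=> ?; split].
rewrite integral_cst // Pn1 mule1 ge0_integralD //; last 3 first.
  - exact/measurable_EFinP/measurable_indic.
  - by move=> x _; apply: mule_ge0; [rewrite lee_fin expR_ge0 | exact: phi0].
  - exact: measurable_funeM.
rewrite ge0_integralZl // PA.
move=> h1; apply: (le_trans h1); apply: leeD2l.
rewrite -(edelta delta d0) EFinM; apply: lee_wpmul2l => //.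
Qed.
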